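(* For every $m\in\mathbb{N}$ and every $0<\varepsilon<1$, the set $E_\varepsilon$ is a convex subset of $\mathbb{C}^m$.
   Context: For $m\in\mathbb{N}$ let $\xi_j=e^{(2j-1)\pi i/m}$, $j=1,\dots,m$ (the $m$-th roots of $-1$ in counterclockwise order), with $\xi_{m+1}:=\xi_1$. For $\varepsilon>0$ define \[E_\varepsilon=\Big\{(r_1,\dots,r_m)\in\prod_{j=1}^m\exp(\overline{D}(0,\varepsilon)) : \tfrac{r_{j+1}\xi_{j+1}-r_j\xi_j}{\xi_{j+1}-\xi_j}\in\exp(\overline{D}(0,\varepsilon)),\ 1\le j\le m\Big\},\] with $r_{m+1}:=r_1$, where $\exp(\overline D(0,\varepsilon))=\{e^{u}:|u|\le\varepsilon\}$. *)

(* Defs.v *)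
From Stdlib Require Import Reals Lra.
Open Scope R_scope.

Definition C : Type := (R * R)%type.

Definition Cadd (z w : C) : C := (fst z + fst w, snd z + snd w).
Definition Csub (z w : C) : C := (fst z - fst w, snd z - snd w).
Definition Cmul (z w : C) : C :=
  (fst z * fst w - snd z * snd w, fst z * snd w + snd z * fst w).
Definition Cscale (t : R) (z : C) : C := (t * fst z, t * snd z).
Definition Cnorm (z : C) : R := sqrt (fst z ^ 2 + snd z ^ 2).
(* z / w (only used with w <> 0) *)
Definition Cdiv (z w : C) : C :=
  let d := fst w ^ 2 + snd w ^ 2 in
  ((fst z * fst w + snd z * snd w) / d, (snd z * fst w - fst z * snd w) / d).
Definition Cexp (z : C) : C := (exp (fst z) * cos (snd z), exp (fst z) * sin (snd z)).

Definition in_expDisk (eps : R) (z : C) : Prop :=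
  exists u : C, Cnorm u <= eps /\ Cexp u = z.

(* xi_j = e^{(2j-1) pi i / m}; here indices are 0-based: index k (0 <= k < m)
   corresponds to the paper's j = k+1, so xi k = e^{(2k+1) pi i / m}. *)
Definition xi (m k : nat) : C := Cexp (0, (2 * INR k + 1) * PI / INR m).

(* cyclic successor of a 0-based index: k+1 mod m, so r_{m+1} := r_1 *)
Definition succ_idx (m k : nat) : nat := Nat.modulo (S k) m.

(* Points of C^m are functions nat -> C, only indices 0..m-1 being relevant. *)
Definition E (m : nat) (eps : R) (r : nat -> C) : Prop :=
  forall k : nat, (k < m)%nat ->
    in_expDisk eps (r k) /\
    in_expDisk eps
      (Cdiv (Csub (Cmul (r (succ_idx m k)) (xi m (succ_idx m k))) (Cmul (r k) (xi m k)))
            (Csub (xi m (succ_idx m k)) (xi m k))).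

Definition convex_Cm (S : (nat -> C) -> Prop) : Prop :=
  forall (r s : nat -> C) (t : R), S r -> S s -> 0 <= t <= 1 ->
    S (fun k => Cadd (Cscale (1 - t) (r k)) (Cscale t (s k))).

(* Main.v *)
Require Import Defs.
From Stdlib Require Import Reals Lra Psatz.
From Coquelicot Require Import Coquelicot.
Require Import Defs.
Open Scope R_scope.



Lemma cos_pos_small y : Rabs y < 1 -> 0 < cos y.
Proof. intros H. apply cos_gt_0; pose proof PI2_1; apply Rabs_def2 in H; lra. Qed.

Lemma lemB_pos y : 0 <= y < 1 -> exp (sqrt (1 - y^2) - 1) <= cos y.
Proof.
  intros Hy.
  set (phi := fun z => ln (cos z) - sqrt (1 - z^2) + 1).
  set (dphi := fun z => - (sin z / cos z) + z / sqrt (1 - z^2)).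
  assert (Hphi : 0 <= phi y).
  { destruct (Req_dec y 0) as [->|Ny].
    - unfold phi. rewrite cos_0, ln_1. replace (1 - 0^2) with 1 by ring. rewrite sqrt_1. lra.
    - destruct (MVT_cor2 phi dphi 0 y) as [c [Hc1 Hc2]]; [lra| |].
      + intros c Hc. apply is_derive_Reals.
        assert (0 < cos c) by (apply cos_pos_small; rewrite Rabs_right; lra).
        assert (0 < 1 - c^2) by nra.
        assert (0 < sqrt (1 - c^2)) by (apply sqrt_lt_R0; lra).
        unfold phi, dphi. auto_derive.
        * repeat split; lra.
        * replace (1 + - (c*(c*1))) with (1 - c^2) by ring. field. lra.
      + assert (phi 0 = 0).
        { unfold phi. rewrite cos_0, ln_1. replace (1 - 0^2) with 1 by ring. rewrite sqrt_1. lra. }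
        assert (0 <= dphi c).
        { unfold dphi.
          assert (0 < cos c) by (apply cos_pos_small; rewrite Rabs_right; lra).
          assert (0 < 1 - c^2) by nra.
          set (s := sqrt (1 - c^2)).
          assert (0 < s) by (apply sqrt_lt_R0; lra).
          assert (s * s = 1 - c^2) by (apply sqrt_sqrt; lra).
          assert (0 <= sin c) by (apply sin_ge_0; pose proof PI2_1; lra).
          assert (sin c < c) by (apply sin_lt_x; lra).
          pose proof (sin2_cos2 c). unfold Rsqr in *.
          assert (E1 : (c*cos c)*(c*cos c) - (sin c * s)*(sin c * s) = c*c - sin c * sin c).
          { replace ((sin c * s)*(sin c * s)) with (sin c * sin c * (s*s)) by ring.
            rewrite H3. replace (c*c - sin c * sin c) with (c*c*(sin c * sin c + cos c * cos c) - sin c * sin c) by (rewrite H6; ring). ring. }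
          assert (0 <= c * cos c) by nra.
          assert (0 <= sin c * s) by nra.
          assert (sin c * s <= c * cos c) by nra.
          assert (sin c / cos c <= c / s).
          { apply (Rmult_le_reg_r (cos c * s)); [nra|].
            field_simplify; try lra; nra. }
          lra. }
        nra. }
  unfold phi in Hphi.
  assert (0 < cos y) by (apply cos_pos_small; rewrite Rabs_right; lra).
  rewrite <- (exp_ln (cos y)) by lra.
  (destruct (Rle_lt_or_eq_dec _ _ (ltac:(lra) : sqrt (1 - y ^ 2) - 1 <= ln (cos y))) as [h|h]; [left; apply exp_increasing; auto | right; rewrite h; auto]).
Qed.


Lemma qc (q dq : R -> R) :
  (forall s, 0 <= s <= 1 -> derivable_pt_lim q s (dq s)) ->
  (forall s, 0 < s < 1 -> dq s = 0 -> exists c, 0 < c /\ derivable_pt_lim dq s c) ->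
  forall t, 0 <= t <= 1 -> q t <= Rmax (q 0) (q 1).
Proof.
  intros Hd H2 t Ht.
  destruct (continuity_ab_maj q 0 1) as [t0 [Hmax Ht0]]; [lra| |].
  { intros c Hc. apply derivable_continuous_pt. exists (dq c). apply Hd; auto. }
  assert (q t <= q t0) by (apply Hmax; auto).
  destruct (Req_dec t0 0) as [E0|N0]; [subst; pose proof (Rmax_l (q 0) (q 1)); lra|].
  destruct (Req_dec t0 1) as [E1|N1]; [subst; pose proof (Rmax_r (q 0) (q 1)); lra|].
  exfalso.
  assert (Hin : 0 < t0 < 1) by lra.
  assert (Hz : dq t0 = 0).
  { assert (pr : derivable_pt q t0) by (exists (dq t0); apply Hd; lra).
    rewrite <- (derive_pt_eq_0 q t0 (dq t0) pr) by (apply Hd; lra).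
    apply (deriv_maximum q 0 1 t0 pr); try lra.
    intros x Hx1 Hx2; apply Hmax; lra. }
  destruct (H2 t0 Hin Hz) as [c [Hc Hdc]].
  destruct (Hdc (c/2) ltac:(lra)) as [del Hdel].
  set (h := Rmin (del/2) ((1 - t0)/2)).
  assert (Hh : 0 < h /\ h < del /\ t0 + h < 1).
  { pose proof (cond_pos del). unfold h. split; [apply Rmin_pos; lra|].
    split; [eapply Rle_lt_trans; [apply Rmin_l|lra]|].
    pose proof (Rmin_r (del/2) ((1 - t0)/2)); lra. }
  assert (Hpos : forall k, 0 < k <= h -> 0 < dq (t0 + k)).
  { intros k Hk. assert (k <> 0) by lra.
    assert (Rabs k < del) by (rewrite Rabs_right; lra).
    specialize (Hdel k H0 H1). rewrite Hz, Rminus_0_r in Hdel.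
    apply Rabs_def2 in Hdel. destruct Hdel as [_ Hl].
    assert (0 < dq (t0 + k) / k) by lra.
    assert (dq (t0+k) = dq (t0+k)/k * k) by (field; lra).
    rewrite H4. apply Rmult_lt_0_compat; lra. }
  destruct (MVT_cor2 q dq t0 (t0 + h)) as [xi [Hxi1 Hxi2]]; [lra| |].
  { intros c0 Hc0. apply Hd. lra. }
  assert (0 < dq xi).
  { replace xi with (t0 + (xi - t0)) by ring. apply Hpos. lra. }
  assert (q (t0 + h) <= q t0) by (apply Hmax; lra).
  assert (0 < dq xi * (t0 + h - t0)) by (apply Rmult_lt_0_compat; lra).
  lra.
Qed.

Lemma sqrt_eq x y : 0 <= y -> y*y = x -> sqrt x = y.
Proof. intros H E; rewrite <- E; apply sqrt_square; auto. Qed.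

Lemma sq_of_norm (eps x y : R) : sqrt (x^2 + y^2) <= eps -> x^2 + y^2 <= eps^2.
Proof.
  intros H. pose proof (sqrt_pos (x^2+y^2)).
  rewrite <- (sqrt_sqrt (x^2+y^2)) by nra. nra.
Qed.

Lemma lemB y : Rabs y < 1 -> exp (sqrt (1 - y^2) - 1) <= cos y.
Proof.
  intros H. destruct (Rle_or_lt 0 y).
  - apply lemB_pos. rewrite Rabs_right in H; lra.
  - rewrite <- cos_neg. replace (y^2) with ((-y)^2) by ring.
    apply lemB_pos. rewrite Rabs_left in H; lra.
Qed.

Lemma lemA (eps x y : R) : eps < 1 -> sqrt (x^2 + y^2) <= eps -> 0 < eps ->
  exp (-1) < exp x * cos y.
Proof.
  intros He Hn Hp. apply sq_of_norm in Hn.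
  assert (Hy : Rabs y < 1) by (apply Rabs_def1; nra).
  pose proof (lemB y Hy).
  assert (0 < 1 - y^2) by nra.
  set (s := sqrt (1 - y^2)) in *.
  assert (0 < s) by (apply sqrt_lt_R0; lra).
  assert (s * s = 1 - y^2) by (apply sqrt_sqrt; lra).
  assert (-x < s) by nra.
  apply Rlt_le_trans with (exp x * exp (s - 1)).
  - rewrite <- exp_plus. apply exp_increasing. lra.
  - apply Rmult_le_compat_l; [left; apply exp_pos|auto].
Qed.

Section Main.
Variables (a1 b1 a2 b2 : R).
Definition Da := a2 - a1.
Definition Db := b2 - b1.
Definition af s := a1 + s * Da.
Definition bf s := b1 + s * Db.
Definition rf s := af s ^ 2 + bf s ^ 2.
Definition Xf s := ln (rf s) / 2.
Definition Yf s := atan (bf s / af s).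
Definition Pf s := af s * Da + bf s * Db.
Definition Qf s := af s * Db - bf s * Da.
Definition qf s := Xf s ^ 2 + Yf s ^ 2.
Definition dqf s := 2 * (Xf s * Pf s + Yf s * Qf s) / rf s.

Lemma rf_pos s : 0 < af s -> 0 < rf s.
Proof. intros; unfold rf; nra. Qed.

Lemma qf_der s : 0 < af s -> derivable_pt_lim qf s (dqf s).
Proof.
  intros Ha. pose proof (rf_pos s Ha) as Hr. apply is_derive_Reals.
  unfold qf, dqf, Xf, Yf, Pf, Qf. unfold rf in *. unfold af, bf in *.
  auto_derive.
  - repeat split; lra.
  - replace ((a1 + s * Da) * ((a1 + s * Da) * 1) + (b1 + s * Db) * ((b1 + s * Db) * 1)) with ((a1 + s * Da) ^ 2 + (b1 + s * Db) ^ 2) by ring.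
    unfold Rdiv. unfold Rsqr. field; repeat split; try lra; nra.
Qed.

Lemma dqf_der s : 0 < af s -> dqf s = 0 ->
  derivable_pt_lim dqf s (2 * (Da^2 + Db^2) * (1 + Xf s) / rf s).
Proof.
  intros Ha Hz. pose proof (rf_pos s Ha) as Hr. apply is_derive_Reals.
  assert (Z : Xf s * Pf s + Yf s * Qf s = 0).
  { unfold dqf in Hz. apply (Rmult_eq_reg_r (2 / rf s)); [|apply Rgt_not_eq; apply Rdiv_lt_0_compat; lra].
    rewrite Rmult_0_l. rewrite <- Hz. field. lra. }
  replace (2 * (Da^2 + Db^2) * (1 + Xf s) / rf s) with
    (2 * (Da^2 + Db^2) * (1 + Xf s) / rf s - 4 * Pf s * (Xf s * Pf s + Yf s * Qf s) / (rf s)^2)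
    by (rewrite Z; field; lra).
  unfold dqf, Xf, Yf, Pf, Qf. unfold rf in *. unfold af, bf in *.
  auto_derive.
  - repeat split; lra.
  - replace ((a1 + s * Da) * ((a1 + s * Da) * 1) + (b1 + s * Db) * ((b1 + s * Db) * 1)) with ((a1 + s * Da) ^ 2 + (b1 + s * Db) ^ 2) by ring.
    unfold Rdiv. unfold Rsqr. field; repeat split; try lra; nra.
Qed.
End Main.

Lemma sq_pos x : x <> 0 -> 0 < x^2.
Proof. intros; destruct (Rtotal_order x 0) as [h|[h|h]]; nra. Qed.

Lemma conv_disk (eps : R) : 0 < eps < 1 -> forall z1 z2 t,
  in_expDisk eps z1 -> in_expDisk eps z2 -> 0 <= t <= 1 ->
  in_expDisk eps (Cadd (Cscale (1 - t) z1) (Cscale t z2)).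
Proof.
  intros He z1 z2 t [[x1 y1] [Hn1 He1]] [[x2 y2] [Hn2 He2]] Ht.
  destruct z1 as [a1 b1], z2 as [a2 b2].
  unfold Cexp in He1, He2; simpl in He1, He2.
  injection He1 as Ea1 Eb1. injection He2 as Ea2 Eb2.
  unfold Cnorm in Hn1, Hn2; simpl in Hn1, Hn2.
  pose proof (lemA eps x1 y1 ltac:(lra) Hn1 ltac:(lra)) as A1.
  pose proof (lemA eps x2 y2 ltac:(lra) Hn2 ltac:(lra)) as A2.
  rewrite Ea1 in A1. rewrite Ea2 in A2.
  pose proof (sq_of_norm _ _ _ Hn1) as S1. pose proof (sq_of_norm _ _ _ Hn2) as S2.
  pose proof (exp_pos (-1)) as Ep.
  unfold Cadd, Cscale; simpl.
  assert (HD : (a2 - a1 = 0 /\ b2 - b1 = 0) \/ 0 < (a2 - a1)^2 + (b2 - b1)^2).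
  { destruct (Req_dec (a2 - a1) 0); destruct (Req_dec (b2 - b1) 0); [left; auto|right..].
    - pose proof (sq_pos _ H0); nra.
    - pose proof (sq_pos _ H); nra.
    - pose proof (sq_pos _ H); nra. }
  destruct HD as [[D1 D2]|HD].
  { exists (x1, y1). split; [unfold Cnorm; simpl; auto|].
    unfold Cexp; simpl. rewrite Ea1, Eb1. f_equal; nra. }
  set (q := qf a1 b1 a2 b2). set (dq := dqf a1 b1 a2 b2).
  assert (Haf : forall s, 0 <= s <= 1 -> exp (-1) < af a1 a2 s).
  { intros s Hs. unfold af, Da.
    assert (0 <= (1-s)*(a1 - exp (-1))) by (apply Rmult_le_pos; lra).
    assert (0 <= s*(a2 - exp (-1))) by (apply Rmult_le_pos; lra).
    destruct (Req_dec s 0) as [->|Hs0]; [lra|].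
    assert (0 < s*(a2 - exp (-1))) by (apply Rmult_lt_0_compat; lra). nra. }
  assert (HX : forall s, 0 <= s <= 1 -> -1 < Xf a1 b1 a2 b2 s).
  { intros s Hs. specialize (Haf s Hs). unfold Xf.
    assert (0 < af a1 a2 s * af a1 a2 s) by nra.
    assert (ln (af a1 a2 s * af a1 a2 s) <= ln (rf a1 b1 a2 b2 s)).
    { unfold rf. destruct (Rle_lt_or_eq_dec (af a1 a2 s * af a1 a2 s) (af a1 a2 s ^ 2 + bf b1 b2 s ^ 2)) as [h|h]; [nra| left; apply ln_increasing; auto | right; rewrite h; auto]. }
    rewrite ln_mult in H0 by lra.
    assert (-1 < ln (af a1 a2 s)).
    { rewrite <- (ln_exp (-1)). apply ln_increasing; auto. }
    lra. }
  assert (Hq := qc q dq).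
  assert (Hqt : q t <= Rmax (q 0) (q 1)).
  { apply Hq; auto.
    - intros s Hs. apply qf_der. specialize (Haf s Hs). lra.
    - intros s Hs Hz. specialize (Haf s ltac:(lra)). specialize (HX s ltac:(lra)).
      eexists. split; [|apply dqf_der; [lra|exact Hz]].
      pose proof (rf_pos a1 b1 a2 b2 s ltac:(lra)).
      unfold Da, Db. apply Rdiv_lt_0_compat; [|lra]. nra. }
  assert (Hcos1 : 0 < cos y1) by (apply cos_pos_small; apply Rabs_def1; nra).
  assert (Hcos2 : 0 < cos y2) by (apply cos_pos_small; apply Rabs_def1; nra).
  assert (Hend : forall x y a b, exp x * cos y = a -> exp x * sin y = b -> 0 < cos y ->
     x^2 + y^2 <= eps^2 -> (ln (a^2 + b^2) / 2)^2 + (atan (b / a))^2 <= eps^2).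
  { intros x y a b Ea Eb Hc Hs.
    assert (a^2 + b^2 = exp (x + x)).
    { rewrite exp_plus, <- Ea, <- Eb. pose proof (sin2_cos2 y). unfold Rsqr in *.
      replace ((exp x * cos y)^2) with (exp x * exp x * (cos y * cos y)) by ring.
      replace ((exp x * sin y)^2) with (exp x * exp x * (sin y * sin y)) by ring. nra. }
    rewrite H, ln_exp.
    assert (b / a = tan y).
    { unfold tan. rewrite <- Ea, <- Eb. field. split; [lra|apply Rgt_not_eq, exp_pos]. }
    rewrite H0, atan_tan.
    - replace ((x + x) / 2) with x by field. lra.
    - assert (Rabs y < PI/2) by (apply Rabs_def1; pose proof PI2_1; nra). apply Rabs_def2 in H1. lra. }
  assert (Q0 : q 0 <= eps^2).
  { unfold q, qf, Xf, Yf, rf, af, bf, Da, Db.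
    replace (a1 + 0 * (a2 - a1)) with a1 by ring. replace (b1 + 0 * (b2 - b1)) with b1 by ring.
    eapply Hend; eauto. }
  assert (Q1 : q 1 <= eps^2).
  { unfold q, qf, Xf, Yf, rf, af, bf, Da, Db.
    replace (a1 + 1 * (a2 - a1)) with a2 by ring. replace (b1 + 1 * (b2 - b1)) with b2 by ring.
    eapply Hend; eauto. }
  assert (Qt : q t <= eps^2) by (eapply Rle_trans; [exact Hqt|apply Rmax_lub; auto]).
  specialize (Haf t Ht).
  set (a := af a1 a2 t) in *. set (b := bf b1 b2 t).
  assert (Ea : (1 - t) * a1 + t * a2 = a) by (unfold a, af, Da; ring).
  assert (Eb : (1 - t) * b1 + t * b2 = b) by (unfold b, bf, Db; ring).
  rewrite Ea, Eb.
  exists (Xf a1 b1 a2 b2 t, Yf a1 b1 a2 b2 t). split.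
  - unfold Cnorm; simpl. rewrite <- (sqrt_pow2 eps) by lra.
    apply sqrt_le_1_alt. exact Qt.
  - assert (Hr : 0 < a^2 + b^2) by nra.
    assert (EX : exp (Xf a1 b1 a2 b2 t) = sqrt (a^2 + b^2)).
    { symmetry. apply sqrt_eq; [left; apply exp_pos|].
      rewrite <- exp_plus. unfold Xf, rf. fold a b.
      replace (ln (a ^ 2 + b ^ 2) / 2 + ln (a ^ 2 + b ^ 2) / 2) with (ln (a ^ 2 + b ^ 2)) by field.
      apply exp_ln; auto. }
    assert (Hsq : 0 < sqrt (a^2 + b^2)) by (apply sqrt_lt_R0; auto).
    assert (ES : sqrt (1 + (b / a)²) = sqrt (a^2 + b^2) / a).
    { apply sqrt_eq. { left. apply Rdiv_lt_0_compat; lra. }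
      unfold Rsqr.
      replace (sqrt (a ^ 2 + b ^ 2) / a * (sqrt (a ^ 2 + b ^ 2) / a)) with (sqrt (a ^ 2 + b ^ 2) * sqrt (a ^ 2 + b ^ 2) / (a * a)) by (field; lra).
      rewrite sqrt_sqrt by lra. field. lra. }
    unfold Cexp; simpl. rewrite EX. unfold Yf. fold a b.
    rewrite cos_atan, sin_atan, ES. f_equal; field; lra.
Qed.

Lemma lin_div (r1 r2 s1 s2 x1 x2 : C) (t : R) :
  Cdiv (Csub (Cmul (Cadd (Cscale (1-t) r1) (Cscale t s1)) x1)
             (Cmul (Cadd (Cscale (1-t) r2) (Cscale t s2)) x2)) (Csub x1 x2) =
  Cadd (Cscale (1-t) (Cdiv (Csub (Cmul r1 x1) (Cmul r2 x2)) (Csub x1 x2)))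
       (Cscale t (Cdiv (Csub (Cmul s1 x1) (Cmul s2 x2)) (Csub x1 x2))).
Proof.
  destruct r1, r2, s1, s2, x1, x2. unfold Cdiv, Csub, Cmul, Cadd, Cscale; simpl.
  f_equal; unfold Rdiv; ring.
Qed.

Theorem lemma3p5 : forall (m : nat) (eps : R),
  (2 <= m)%nat -> 0 < eps < 1 -> convex_Cm (E m eps).
Proof.
  intros m eps Hm He r s t Hr Hs Ht k Hk.
  destruct (Hr k Hk) as [Hr1 Hr2]; destruct (Hs k Hk) as [Hs1 Hs2].
  split.
  - apply conv_disk; auto.
  - rewrite lin_div. apply conv_disk; auto.
Qed.
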